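(* Given any instance and any real number $t\ge1$, let $N^*\subseteq N$ be a $t$-cohesive group and $A$ an allocation satisfying EJR-M. Then the average satisfaction of $N^*$ with respect to $A$ is at least $\lfloor t\rfloor\cdot\left(1-\frac{\lfloor t\rfloor+1}{2t}\right)$.
   Context: Model: There is a set of agents $N=\{1,\dots,n\}$. The resource $R$ consists of a cake $C=[0,c]$ for a real $c\ge 0$ and a set of indivisible goods $G=\{g_1,\dots,g_m\}$ for an integer $m\ge 0$, with $\max(c,m)>0$. A piece of cake is a union of finitely many disjoint closed subintervals of $C$; its length $\ell(\cdot)$ is the sum of the lengths of its intervals. A bundle $R'=(C',G')$ consists of a piece of cake $C'\subseteq C$ and a set $G'\subseteq G$; its size is $s(R')=\ell(C')+|G'|$. Each agent $i$ approves a bundle $R_i=(C_i,G_i)$, and her utility for a bundle $R'$ is $u_i(R')=\ell(C_i\cap C')+|G_i\cap G'|$. A parameter $\alpha\in(0,c+m]$ is given; an allocation is a bundle $A$ with $s(A)\le\alpha$. For a real $t>0$, $N^*\subseteq N$ is $t$-cohesive if $|N^*|\ge t n/\alpha$ and $s(\bigcap_{i\in N^*}R_i)\ge t$. EJR-M: an allocation $A$ satisfies EJR-M if for every real $t>0$ and every $t$-cohesive group $N^*$ for which there exists a bundle $R^*\subseteq R$ with $s(R^* )=t$ and $R^*\subseteq R_i$ for all $i\in N^*$, there is $j\in N^*$ with $u_j(A)\ge t$. The average satisfaction of a group $N'\subseteq N$ with respect to $A$ is $\frac1{|N'|}\sum_{i\in N'}u_i(A)$. *)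

(* Defs.v *)
From HB Require Import structures.
From mathcomp Require Import all_boot all_order all_algebra.
From mathcomp Require Import all_classical all_reals all_analysis.
Set Implicit Arguments. Unset Strict Implicit. Unset Printing Implicit Defensive.
Import Order.TTheory GRing.Theory Num.Theory.
Local Open Scope classical_set_scope.
Local Open Scope ring_scope.

Section CakeGoods.
Variable R : realType.

(* A piece of cake of C = [0,c]: a union of finitely many pairwise disjoint
   closed subintervals [a,b] (0 <= a <= b <= c) of C, given by a list of
   endpoint pairs. *)
Definition is_piece (c : R) (S : set R) : Prop :=
  exists s : seq (R * R),
    [/\ all (fun p => (0 <= p.1) && (p.1 <= p.2) && (p.2 <= c)) s,
        (forall i j, (i < j < size s)%N ->
           ((nth (0,0) s i).2 < (nth (0,0) s j).1) \/
           ((nth (0,0) s j).2 < (nth (0,0) s i).1))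
      & S = [set x | has (fun p => (p.1 <= x) && (x <= p.2)) s]].

Definition ell (S : set R) : R := fine (@lebesgue_measure R S).

Definition bundle (m : nat) := (set R * {set 'I_m})%type.

Definition is_bundle (c : R) (m : nat) (B : bundle m) : Prop := is_piece c B.1.

Definition bsize (m : nat) (B : bundle m) : R := ell B.1 + #|B.2|%:R.

(* u_i(B) where Ri is the bundle approved by agent i *)
Definition util (m : nat) (Ri B : bundle m) : R :=
  ell (Ri.1 `&` B.1) + #|Ri.2 :&: B.2|%:R.

Definition subbundle (m : nat) (B B' : bundle m) : Prop :=
  B.1 `<=` B'.1 /\ B.2 \subset B'.2.

(* intersection of the approved bundles of the agents in Ns
   (intersected with the whole resource R, so that the empty intersection is R) *)
Definition inter (c : R) (n m : nat) (Rs : 'I_n -> bundle m) (Ns : {set 'I_n})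
  : bundle m :=
  ([set x | (0 <= x <= c) /\ forall i, i \in Ns -> (Rs i).1 x],
   finset (fun g : 'I_m => [forall i in Ns, g \in (Rs i).2])).

Definition cohesive (c : R) (n m : nat) (alpha : R) (Rs : 'I_n -> bundle m)
  (t : R) (Ns : {set 'I_n}) : Prop :=
  t * n%:R / alpha <= #|Ns|%:R /\ t <= bsize (inter c Rs Ns).

Definition EJRM (c : R) (n m : nat) (alpha : R) (Rs : 'I_n -> bundle m)
  (A : bundle m) : Prop :=
  forall (t : R) (Ns : {set 'I_n}), 0 < t -> cohesive c alpha Rs t Ns ->
    (exists Rstar : bundle m, [/\ is_bundle c Rstar, bsize Rstar = t &
        forall i, i \in Ns -> subbundle Rstar (Rs i)]) ->
    exists2 j, j \in Ns & t <= util (Rs j) A.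

Definition avg_sat (n m : nat) (Rs : 'I_n -> bundle m) (A : bundle m)
  (Ns : {set 'I_n}) : R :=
  (\sum_(i in Ns) util (Rs i) A) / #|Ns|%:R.

End CakeGoods.

(* Main.v *)
Require Import Defs.
From HB Require Import structures.
From mathcomp Require Import all_boot all_order all_algebra.
From mathcomp Require Import all_classical all_reals all_analysis.
From mathcomp Require Import ring lra.
Import Order.TTheory GRing.Theory Num.Theory.
Local Open Scope ring_scope.
Set Implicit Arguments. Unset Strict Implicit.
Section Lists.
Variable R : realType.
Local Open Scope classical_set_scope.
Local Open Scope ring_scope.
Implicit Types (p q x : R * R) (s : seq (R * R)).

Definition setof s : set R := [set y | has (fun p => (p.1 <= y) && (y <= p.2)) s].
Definition sep p q : bool := (p.2 < q.1) || (q.2 < p.1).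
Definition validp (c : R) p : bool := (0 <= p.1) && (p.1 <= p.2) && (p.2 <= c).
Definition subi x p : bool := (p.1 <= x.1) && (x.2 <= p.2).
Definition len p : R := p.2 - p.1.
Definition sumlen s : R := \sum_(p <- s) len p.

Lemma sep_sym p q : sep p q = sep q p.
Proof. by rewrite /sep orbC. Qed.

Lemma sep_sub x y p q : subi x p -> subi y q -> sep p q -> sep x y.
Proof.
case/andP=> h1 h2 /andP[h3 h4]; rewrite /sep => /orP[h|h]; apply/orP.
  by left; apply: (le_lt_trans h2); apply: (lt_le_trans h).
by right; apply: (le_lt_trans h4); apply: (lt_le_trans h).
Qed.

Lemma subi_setof x s : (forall y, y \in x :: [::] -> True) -> True.
Proof. by []. Qed.

Lemma piece_iff (c : R) (S : set R) :
  is_piece c S <-> exists s, [/\ all (validp c) s, pairwise sep s & S = setof s].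
Proof.
split.
  case=> s [hv hp ->]; exists s; split => //.
  apply/(pairwiseP (0,0)) => i j; rewrite !inE => hi hj hij.
  by apply/orP; apply: hp; rewrite hij.
case=> s [hv /(pairwiseP (0,0)) hp ->]; exists s; split => //.
move=> i j /andP[hij hj]; have hi := ltn_trans hij hj.
by have /orP := hp i j hi hj hij.
Qed.

Definition cap p q : R * R := (Num.max p.1 q.1, Num.min p.2 q.2).
Definition ne x : bool := x.1 <= x.2.
Fixpoint capl s s' : seq (R * R) :=
  if s is p :: s1 then seq.filter ne (map (cap p) s') ++ capl s1 s' else [::].

Lemma subi_capl p q : subi (cap p q) p && subi (cap p q) q.
Proof.
by rewrite /subi /cap /= !le_max !ge_min !lexx /= !orbT.
Qed.

Lemma mem_capl s s' x : x \in capl s s' ->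
  [/\ ne x, (exists2 p, p \in s & subi x p) & (exists2 q, q \in s' & subi x q)].
Proof.
elim: s => [|p s IH] //=; rewrite mem_cat => /orP[|/IH [h1 [p0 hp0 h2] h3]].
  rewrite mem_filter => /andP[hne /mapP[q hq hx]]; subst x; split => //.
    by exists p; rewrite ?mem_head //; case/andP: (subi_capl p q).
  by exists q => //; case/andP: (subi_capl p q).
by split => //; exists p0 => //; rewrite inE hp0 orbT.
Qed.

Lemma capl_pairwise s s' : pairwise sep s -> pairwise sep s' ->
  pairwise sep (capl s s').
Proof.
move=> hs hs'; elim: s hs => [|p s IH] //= /andP[hp hs].
rewrite pairwise_cat IH // andbT; apply/andP; split.
  apply/allrelP => x y; rewrite mem_filter => /andP[_ /mapP[q _ ->]] hy.
  case/mem_capl: hy => _ [p' hp' hy] _.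
  have [h1 _] := andP (subi_capl p q).
  by apply: (sep_sub h1 hy); move/allP: hp; apply.
apply: pairwise_filter; rewrite pairwise_map.
elim: s' hs' {IH} => [|q s' IH] //= /andP[hq hs']; rewrite IH // andbT.
apply/allP => q' hq'.
have [_ h1] := andP (subi_capl p q); have [_ h2] := andP (subi_capl p q').
by apply: (sep_sub h1 h2); move/allP: hq; apply.
Qed.

Lemma capl_valid c s s' : all (validp c) s -> all (validp c) (capl s s').
Proof.
move=> hs; apply/allP => x /mem_capl [hne [p hp /andP[h1 h2]] _].
have /andP[/andP[v1 v2] v3] := allP hs p hp.
by rewrite /validp -/(ne x) hne (le_trans v1 h1) (le_trans h2 v3).
Qed.

Lemma capl_setof s s' : setof (capl s s') = setof s `&` setof s'.
Proof.
rewrite predeqE => y; split.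
  case/hasP => x /mem_capl [_ [p hp /andP[h1 h2]] [q hq /andP[h3 h4]]] /andP[h5 h6].
  split; apply/hasP.
    by exists p => //; rewrite (le_trans h1 h5) (le_trans h6 h2).
  by exists q => //; rewrite (le_trans h3 h5) (le_trans h6 h4).
case=> /hasP [p hp /andP[h1 h2]] /hasP [q hq /andP[h3 h4]].
apply/hasP; exists (cap p q); last by rewrite /cap /= ge_max le_min h1 h3 h2 h4.
elim: s hp => [|p' s IH] //=; rewrite inE mem_cat => /orP[/eqP<-|/IH ->]; last by rewrite orbT.
apply/orP; left; rewrite mem_filter; apply/andP; split; last by apply: map_f.
rewrite /ne /cap /= ge_max !le_min.
by rewrite (le_trans h1 h2) (le_trans h1 h4) (le_trans h3 h2) (le_trans h3 h4).
Qed.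

Fixpoint trunc (r : R) s : seq (R * R) :=
  if s is p :: s1 then
    (if r <= len p then [:: (p.1, p.1 + r)] else p :: trunc (r - len p) s1)
  else [::].

Lemma mem_trunc r s x : 0 <= r -> all ne s -> x \in trunc r s ->
  ne x /\ exists2 p, p \in s & subi x p.
Proof.
elim: s r => [|p s IH] r //= r0 /andP[hp hs].
case: ifP => hr.
  rewrite inE => /eqP ->; split; first by rewrite /ne /= lerDl.
  exists p; first exact: mem_head.
  by rewrite /subi /= lexx /= -lerBrDl.
rewrite inE => /orP[/eqP ->|].
  by split => //; exists p; rewrite ?mem_head // /subi !lexx.
move/negbT: hr; rewrite -ltNge => hr.
case/IH; first by rewrite subr_ge0 ltW.
  by [].
by move=> h1 [p' hp' h2]; split => //; exists p' => //; rewrite inE hp' orbT.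
Qed.

Lemma trunc_pairwise r s : 0 <= r -> all ne s -> pairwise sep s ->
  pairwise sep (trunc r s).
Proof.
elim: s r => [|p s IH] r //= r0 /andP[hp hs] /andP[hps hss].
case: ifP => hr //=; rewrite IH ?andbT //; last first.
  by move/negbT: hr; rewrite -ltNge subr_ge0 => /ltW.
apply/allP => x hx.
have hr' : 0 <= r - len p by move/negbT: hr; rewrite -ltNge subr_ge0 => /ltW.
have [_ [p' hp' hsub]] := mem_trunc hr' hs hx.
have h0 : subi p p by rewrite /subi !lexx.
by apply: (sep_sub h0 hsub); move/allP: hps; apply.
Qed.

Lemma trunc_valid c r s : 0 <= r -> all (validp c) s -> all (validp c) (trunc r s).
Proof.
move=> r0 hs; have hne : all ne s.
  by apply/allP => p /(allP hs) /andP[/andP[_ h] _].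
apply/allP => x /(mem_trunc r0 hne) [hx [p hp /andP[h1 h2]]].
have /andP[/andP[v1 v2] v3] := allP hs p hp.
by rewrite /validp -/(ne x) hx (le_trans v1 h1) (le_trans h2 v3).
Qed.

Lemma trunc_sub r s : 0 <= r -> all ne s -> setof (trunc r s) `<=` setof s.
Proof.
move=> r0 hne y /hasP [x /(mem_trunc r0 hne) [_ [p hp /andP[h1 h2]]] /andP[h3 h4]].
by apply/hasP; exists p => //; rewrite (le_trans h1 h3) (le_trans h4 h2).
Qed.

Lemma trunc_sumlen r s : 0 <= r -> r <= sumlen s -> sumlen (trunc r s) = r.
Proof.
rewrite /sumlen; elim: s r => [|p s IH] r /= r0.
  by rewrite big_nil => hr; apply/eqP; rewrite eq_le hr r0.
rewrite big_cons => hr; case: ifP => h.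
  by rewrite big_cons big_nil addr0 /len /= addrC addKr.
rewrite big_cons IH; first by rewrite addrC subrK.
  by move/negbT: h; rewrite -ltNge subr_ge0 => /ltW.
by rewrite lerBlDl.
Qed.


Lemma itv_measure (a b : R) : a <= b ->
  lebesgue_measure ([set` `[a, b]] : set R) = (b - a)%:E.
Proof.
move=> ab; rewrite lebesgue_measure_itv /= lte_fin lt_neqAle ab andbT.
by have [->|ab'] := eqVneq a b; rewrite ?subrr // EFinN EFinB.
Qed.

Lemma setof_nil : setof [::] = (set0 : set R).
Proof. by rewrite predeqE. Qed.

Lemma setof_cons p s : setof (p :: s) = [set` `[p.1, p.2]] `|` setof s.
Proof.
rewrite predeqE => y; rewrite /setof /= in_itv /=.
by split => [/orP[h|h]|[h|h]]; [left|right|apply/orP;left|apply/orP;right].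
Qed.

Lemma setof_meas s : measurable (setof s).
Proof.
elim: s => [|p s IH]; first by rewrite setof_nil.
by rewrite setof_cons; apply: measurableU => //; apply: measurable_itv.
Qed.

Lemma setof_measure s : all ne s -> pairwise sep s ->
  lebesgue_measure (setof s) = (sumlen s)%:E.
Proof.
rewrite /sumlen; elim: s => [|p s IH] /=.
  by rewrite setof_nil measure0 big_nil.
case/andP=> hp hs /andP[hps hss].
rewrite setof_cons measureU //.
- by rewrite big_cons EFinD; congr (_ + _); [exact: itv_measure | exact: IH].
- exact: setof_meas.
rewrite predeqE => y; split => // [[]]; rewrite /= in_itv /= => /andP[h1 h2].
case/hasP => q hq /andP[h3 h4].
have := allP hps q hq; rewrite /sep => /orP[h|h].
  by have := lt_le_trans (le_lt_trans h2 h) h3; rewrite ltxx.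
by have := lt_le_trans (le_lt_trans h4 h) h1; rewrite ltxx.
Qed.

Lemma ell_setof s : all ne s -> pairwise sep s -> ell (setof s) = sumlen s.
Proof. by move=> h1 h2; rewrite /ell setof_measure. Qed.

End Lists.
Section Inter.
Variable R : realType.
Local Open Scope classical_set_scope.
Local Open Scope ring_scope.

Lemma all_ne_valid (c : R) s : all (validp c) s -> all (@ne R) s.
Proof. by move=> hs; apply/allP => p /(allP hs) /andP[/andP[_ h] _]. Qed.

Lemma inter_piece (c : R) n m (Rs : 'I_n -> bundle R m) (Ns : {set 'I_n}) :
  0 <= c -> (forall i, is_bundle c (Rs i)) ->
  exists s, [/\ all (validp c) s, pairwise (@sep R) s & (inter c Rs Ns).1 = setof s].
Proof.
move=> c0 hR.
suff H : forall l : seq 'I_n, exists s, [/\ all (validp c) s, pairwise (@sep R) s &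
  [set x | (0 <= x <= c) /\ forall i, i \in l -> (Rs i).1 x] = setof s].
  have [s [h1 h2 h3]] := H (enum Ns).
  exists s; split => //; rewrite -h3 /inter /= predeqE => x; split.
    by case=> h4 h5; split => // i; rewrite mem_enum; apply: h5.
  by case=> h4 h5; split => // i hi; apply: h5; rewrite mem_enum.
elim=> [|i l [s [h1 h2 h3]]].
  exists [:: (0, c)]; split => //=; first by rewrite /validp /= !lexx c0.
  rewrite predeqE => x; rewrite /setof /= orbF; split; first by case.
  by move=> h; split.
have := hR i; rewrite /is_bundle => /piece_iff [si [h4 h5 h6]].
exists (capl s si); split.
- exact: capl_valid.
- exact: capl_pairwise.
rewrite capl_setof -h3 -h6 predeqE => x; split.
  case=> h7 h8; split; first by split => // j hj; apply: h8; rewrite inE hj orbT.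
  by apply: h8; rewrite mem_head.
case=> [[h7 h8] h9]; split => // j; rewrite inE => /orP[/eqP->|hj] //.
exact: h8.
Qed.

Lemma sumlen_ge0 (c : R) s : all (validp c) s -> 0 <= sumlen s.
Proof.
move=> hs; rewrite /sumlen big_seq; apply: sumr_ge0 => p hp.
have /andP[/andP[_ h] _] := allP hs p hp; by rewrite /len subr_ge0.
Qed.

Lemma bsize_inter (c : R) n m (Rs : 'I_n -> bundle R m) (Ns : {set 'I_n}) s :
  all (validp c) s -> pairwise (@sep R) s -> (inter c Rs Ns).1 = setof s ->
  bsize (inter c Rs Ns) = sumlen s + #|(inter c Rs Ns).2|%:R.
Proof.
move=> h1 h2 h3; rewrite /bsize h3 ell_setof //; exact: all_ne_valid h1.
Qed.

Lemma inter_mono (c : R) n m (Rs : 'I_n -> bundle R m) (N1 N2 : {set 'I_n}) :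
  0 <= c -> (forall i, is_bundle c (Rs i)) -> N1 \subset N2 ->
  bsize (inter c Rs N2) <= bsize (inter c Rs N1).
Proof.
move=> c0 hR hsub.
have [s1 [a1 b1 e1]] := inter_piece N1 c0 hR.
have [s2 [a2 b2 e2]] := inter_piece N2 c0 hR.
rewrite (bsize_inter a1 b1 e1) (bsize_inter a2 b2 e2).
apply: lerD.
  have f1 := setof_measure (all_ne_valid a1) b1.
  have f2 := setof_measure (all_ne_valid a2) b2.
  rewrite -lee_fin -f1 -f2.
  apply: le_measure; rewrite ?inE; try exact: setof_meas.
  rewrite -e1 -e2 /inter /= => x [h1 h2]; split => // i hi; apply: h2.
  by move/fintype.subsetP: hsub; apply.
rewrite ler_nat; apply: subset_leq_card; apply/fintype.subsetP => g.
rewrite /inter /= !inE => /forall_inP h; apply/forall_inP => i hi.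
by apply: h; move/fintype.subsetP: hsub; apply.
Qed.

Lemma exists_Rstar (c : R) n m (Rs : 'I_n -> bundle R m) (Ns : {set 'I_n}) (l : nat) :
  0 <= c -> (forall i, is_bundle c (Rs i)) -> l%:R <= bsize (inter c Rs Ns) ->
  exists Rstar : bundle R m, [/\ is_bundle c Rstar, bsize Rstar = l%:R &
    forall i, i \in Ns -> subbundle Rstar (Rs i)].
Proof.
move=> c0 hR hl.
have [s [a1 b1 e1]] := inter_piece Ns c0 hR.
rewrite (bsize_inter a1 b1 e1) in hl.
set G := (inter c Rs Ns).2 in hl *.
pose j := minn l #|G|.
pose G' := [set x in take j (enum G)].
have cG' : #|G'| = j.
  rewrite cardsE; have /card_uniqP -> : uniq (take j (enum G)).
    by apply: take_uniq; exact: enum_uniq.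
  by rewrite size_takel // -cardE geq_minr.
have sG' : G' \subset G.
  by apply/fintype.subsetP => x; rewrite inE => /mem_take; rewrite mem_enum.
pose r : R := l%:R - j%:R.
have r0 : 0 <= r by rewrite subr_ge0 ler_nat geq_minl.
have rs : r <= sumlen s.
  rewrite /r /j; case: (leqP l #|G|) => h.
    by rewrite subrr (sumlen_ge0 a1).
  by rewrite lerBlDr.
have hne := all_ne_valid a1.
have tv := trunc_valid r0 a1.
have tp := trunc_pairwise r0 hne b1.
exists (setof (trunc r s), G'); split.
- by rewrite /is_bundle /=; apply/piece_iff; exists (trunc r s).
- rewrite /bsize /= ell_setof //; last exact: all_ne_valid tv.
  by rewrite trunc_sumlen // cG' /r subrK.
move=> i hi; split => /=.
  move=> x /(trunc_sub r0 hne); rewrite -e1 /inter /= => [[_ h]].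
  exact: h.
apply: (fintype.subset_trans sG'); apply/fintype.subsetP => g; rewrite /G /inter /= inE.
by move/forall_inP; apply.
Qed.

End Inter.
Section Main.
Variable R : realType.
Local Open Scope ring_scope.

Lemma count_bound (u : R) (k : nat) : 0 <= u ->
  \sum_(l < k) (1 - (nat_of_bool (u < (l.+1)%:R))%:R) <= u.
Proof.
move=> u0; elim: k => [|k IH]; first by rewrite big_ord0.
rewrite big_ord_recr /=; case: (ltP u (k.+1)%:R) => h.
  by rewrite subrr addr0.
rewrite subr0; apply: le_trans h; rewrite -natr1 lerD2r.
have -> : k%:R = \sum_(l < k) (1 : R) by rewrite sumr_const card_ord.
apply: ler_sum => l _; rewrite lerBlDr lerDl; case: (_ < _) => //=.
Qed.

Lemma sum_ind {n : nat} (Ns : {set 'I_n}) (P : 'I_n -> bool) :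
  \sum_(i in Ns) ((nat_of_bool (P i))%:R : R) = #|[set i in Ns | P i]|%:R.
Proof.
rewrite -sumr_const; rewrite [RHS]big_mkcond [LHS]big_mkcond /=.
apply: eq_bigr => i _; rewrite inE; case: (i \in Ns); case: (P i) => //.
Qed.

Lemma gauss (k : nat) : (\sum_(l < k) ((l.+1)%:R : R)) * 2 = k%:R * (k%:R + 1).
Proof.
elim: k => [|k IH]; first by rewrite big_ord0 mul0r mul0r.
rewrite big_ord_recr /= mulrDl IH -natr1; ring.
Qed.

Lemma util_ge0 m (Ri B : bundle R m) : 0 <= util Ri B.
Proof.
rewrite /util; apply: addr_ge0 => //; rewrite /ell; apply: fine_ge0.
exact: measure_ge0.
Qed.

End Main.

Theorem mainTheorem13 (R : realType) (c : R) (n m : nat) (alpha : R)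
  (Rs : 'I_n -> bundle R m) (A : bundle R m) (t : R) (Ns : {set 'I_n}) :
  0 <= c -> (0 < c) \/ (0 < m)%N -> (0 < n)%N ->
  0 < alpha -> alpha <= c + m%:R ->
  (forall i, is_bundle c (Rs i)) ->
  is_bundle c A -> bsize A <= alpha ->
  EJRM c alpha Rs A ->
  1 <= t -> cohesive c alpha Rs t Ns ->
  (Num.floor t)%:~R * (1 - ((Num.floor t)%:~R + 1) / (2 * t))
    <= avg_sat Rs A Ns.
Proof.
move=> c0 _ n0 a0 _ hR _ _ hE t1 [hcard hsize].
have t0 : 0 < t by apply: lt_le_trans t1.
have fl0 : 0 <= Num.floor t by rewrite floor_ge0 ltW.
set k := `|Num.floor t|%N.
have kE : (Num.floor t)%:~R = k%:R :> R by rewrite /k -[in LHS](gez0_abs fl0).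
have kt : k%:R <= t by rewrite -kE floor_le.
rewrite kE.
pose u i := util (Rs i) A.
pose beta := n%:R / alpha.
have b0 : 0 < beta by rewrite /beta divr_gt0 // ltr0n.
pose N : R := #|Ns|%:R.
have hN : t * beta <= N by rewrite /beta mulrA.
have N0 : 0 < N by apply: lt_le_trans hN; rewrite mulr_gt0.
have key : forall l : nat, (0 < l)%N -> (l <= k)%N ->
    #|[set i in Ns | u i < l%:R]|%:R < l%:R * beta.
  move=> l l0 lk; rewrite ltNge; apply/negP => h.
  set S := [set i in Ns | u i < l%:R] in h.
  have SN : S \subset Ns by apply/fintype.subsetP => i; rewrite inE => /andP[].
  have hl : l%:R <= bsize (inter c Rs S).
    apply: le_trans (inter_mono c0 hR SN).
    apply: le_trans hsize; apply: le_trans kt; by rewrite ler_nat.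
  have [Rst [h1 h2 h3]] := exists_Rstar c0 hR hl.
  have [j hj hu] : exists2 j, j \in S & l%:R <= util (Rs j) A.
    apply: hE; first by rewrite ltr0n.
      by split => //; rewrite -mulrA.
    by exists Rst; split.
  by move: hj; rewrite inE => /andP[_]; rewrite /u ltNge hu.
have sum1 : \sum_(l < k) (N - (l.+1)%:R * beta) <= \sum_(i in Ns) u i.
  apply: (@le_trans _ _ (\sum_(i in Ns) \sum_(l < k) (1 - (nat_of_bool (u i < (l.+1)%:R))%:R))); last first.
    by apply: ler_sum => i _; apply: count_bound; apply: util_ge0.
  rewrite exchange_big /=; apply: ler_sum => l _.
  rewrite sumrB sumr_const sum_ind -/N lerB //.
  by apply/ltW/key.
have gs := @gauss R k.
rewrite /avg_sat -/N ler_pdivlMr //.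
apply: le_trans sum1.
rewrite sumrB sumr_const card_ord -mulr_suml.
set G := \sum_(l < k) (l.+1)%:R in gs *.
have hX : beta <= N / t by rewrite ler_pdivlMr // mulrC.
have e : k%:R * (1 - (k%:R + 1) / (2 * t)) * N
    = N *+ k - (k%:R * (k%:R + 1)) * (N / t) / 2.
  by rewrite -mulr_natr; field; exact: lt0r_neq0.
rewrite e -/beta.
have K0 : 0 <= k%:R * (k%:R + 1) :> R by apply: mulr_ge0 => //; apply: addr_ge0.
rewrite -mulr_natl.
nra.
Qed.
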